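(* Let $(\mathfrak{h},\langle\cdot,\cdot\rangle)$ be a Kundt pair on the Heisenberg Lie algebra $\mathfrak{n}$. Then it is equivalent to $(\mathfrak{h}_0,\langle\cdot,\cdot\rangle_0)$ where either (1) the matrix of $\langle\cdot,\cdot\rangle_0$ in the basis $(X_1,X_2,X_3)$ is $\begin{pmatrix}1&0&0\\0&-1&0\\0&0&\mu\end{pmatrix}$ with $\mu>0$, and $\mathfrak{h}_0=\mathrm{span}\{X_1+X_2,X_3\}$ or $\mathfrak{h}_0=\mathrm{span}\{X_1-X_2,X_3\}$; or (2) the matrix of $\langle\cdot,\cdot\rangle_0$ in the basis $(X_1,X_2,X_3)$ is $\begin{pmatrix}1&0&0\\0&0&1\\0&1&0\end{pmatrix}$ and $\mathfrak{h}_0=\mathrm{span}\{X_1,X_3\}$.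
   Context: $\mathfrak{n}$ has basis $(X_1,X_2,X_3)$ with only nonzero bracket $[X_1,X_2]=X_3$. For a Lorentzian scalar product $\langle\cdot,\cdot\rangle$ on a Lie algebra $\mathfrak{g}$, the Levi-Civita product is defined by $2\langle u\bullet v,w\rangle=\langle[u,v],w\rangle+\langle[w,u],v\rangle+\langle[w,v],u\rangle$. A Kundt pair on $\mathfrak{g}$ is a pair consisting of a Lorentzian scalar product $\langle\cdot,\cdot\rangle$ and a codimension one subalgebra $\mathfrak{h}$ which is $\langle\cdot,\cdot\rangle$-degenerate, stable by $\bullet$, and such that $e\bullet e=0$ for all $e\in\mathfrak{h}^\perp$. Two Kundt pairs $(\mathfrak{h}_1,\langle\cdot,\cdot\rangle_1)$, $(\mathfrak{h}_2,\langle\cdot,\cdot\rangle_2)$ are equivalent if there is a Lie algebra automorphism $\phi$ of $\mathfrak{g}$ with $\phi(\mathfrak{h}_1)=\mathfrak{h}_2$ and $\phi^*\langle\cdot,\cdot\rangle_2=\langle\cdot,\cdot\rangle_1$. *)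

(* Defs.v *)
(* The Heisenberg Lie algebra n = R^3 (R : realType, i.e. the reals),
   vectors are row vectors 'rV[R]_3 written in the basis (X1,X2,X3);
   scalar products are Gram matrices G : 'M[R]_3, <x,y> = x G y^T. *)
From HB Require Import structures.
From mathcomp Require Import all_boot all_order all_algebra.
From mathcomp Require Import reals.
Set Implicit Arguments. Unset Strict Implicit. Unset Printing Implicit Defensive.
Import Order.TTheory GRing.Theory Num.Theory.
Local Open Scope ring_scope.

Section Heis.
Variable R : realType.

Definition rv3 (a b c : R) : 'rV[R]_3 := \row_(j < 3) nth 0 [:: a; b; c] j.

Definition mx3 (r0 r1 r2 : seq R) : 'M[R]_3 :=
  \matrix_(i < 3, j < 3) nth 0 (nth [::] [:: r0; r1; r2] i) j.

Definition X1 : 'rV[R]_3 := rv3 1 0 0.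
Definition X2 : 'rV[R]_3 := rv3 0 1 0.
Definition X3 : 'rV[R]_3 := rv3 0 0 1.

(* Heisenberg bracket: only nonzero bracket [X1,X2] = X3 *)
Definition hbr (u v : 'rV[R]_3) : 'rV[R]_3 :=
  rv3 0 0 (u 0 0 * v 0 1 - u 0 1 * v 0 0).

Definition form (G : 'M[R]_3) (x y : 'rV[R]_3) : R := (x *m G *m y^T) 0 0.

Definition lorentzian (G : 'M[R]_3) : Prop :=
  G^T = G /\ exists P : 'M[R]_3, P \in unitmx /\ P *m G *m P^T = mx3 [:: 1; 0; 0] [:: 0; 1; 0] [:: 0; 0; -1].

Definition ebas (k : 'I_3) : 'rV[R]_3 := delta_mx 0 k.

(* Levi-Civita product u . v, the unique vector with
   2<u.v,w> = <[u,v],w> + <[w,u],v> + <[w,v],u>  for all w (G nondegenerate). *)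
Definition lcprod (G : 'M[R]_3) (u v : 'rV[R]_3) : 'rV[R]_3 :=
  (\row_(k < 3) (2^-1 * (form G (hbr u v) (ebas k) + form G (hbr (ebas k) u) v
                          + form G (hbr (ebas k) v) u))) *m invmx G.

(* subspaces of n are row spaces of matrices (mxalgebra) *)
Definition subalgebra (h : 'M[R]_3) : Prop :=
  forall u v : 'rV[R]_3, (u <= h)%MS -> (v <= h)%MS -> (hbr u v <= h)%MS.

Definition degenerate_on (G : 'M[R]_3) (h : 'M[R]_3) : Prop :=
  exists u : 'rV[R]_3, [/\ (u <= h)%MS, u != 0 &
     forall w : 'rV[R]_3, (w <= h)%MS -> form G u w = 0].

Definition in_orth (G : 'M[R]_3) (h : 'M[R]_3) (e : 'rV[R]_3) : Prop :=
  forall w : 'rV[R]_3, (w <= h)%MS -> form G e w = 0.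

Definition kundt_pair (h G : 'M[R]_3) : Prop :=
  [/\ lorentzian G,
      \rank h = 2%N /\ subalgebra h,
      degenerate_on G h,
      (forall u v, (u <= h)%MS -> (v <= h)%MS -> (lcprod G u v <= h)%MS)
    & (forall e, in_orth G h e -> lcprod G e e = 0)].

(* Lie algebra automorphisms of n, acting on row vectors by u |-> u *m A *)
Definition lie_aut (A : 'M[R]_3) : Prop :=
  A \in unitmx /\ forall u v : 'rV[R]_3, hbr (u *m A) (v *m A) = hbr u v *m A.

Definition kundt_equiv m1 m2 (h1 : 'M[R]_(m1, 3)) (G1 : 'M[R]_3)
    (h2 : 'M[R]_(m2, 3)) (G2 : 'M[R]_3) : Prop :=
  exists A : 'M[R]_3, [/\ lie_aut A, (h1 *m A == h2)%MS & A *m G2 *m A^T = G1].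

End Heis.

(* Main.v *)
From Pilot Require Import Defs.
From HB Require Import structures.
From mathcomp Require Import all_boot all_order all_algebra.
From mathcomp Require Import reals ring lra.
Import Order.TTheory GRing.Theory Num.Theory.
Local Open Scope ring_scope.
Set Implicit Arguments. Unset Strict Implicit. Unset Printing Implicit Defensive.

Section S.
Variable R : realType.
Local Notation form := (@Pilot.Defs.form R).
Implicit Types (G M B N : 'M[R]_3) (x y z : 'rV[R]_3).

Lemma sum3 (F : 'I_3 -> R) : \sum_(i < 3) F i = F 0 + F 1 + F 2.
Proof.
rewrite !big_ord_recl big_ord0 addr0 addrA; congr (F _ + F _ + F _); exact/val_inj.
Qed.

Lemma ord3P (j : 'I_3) : j = 0 \/ j = 1 \/ j = 2.
Proof.
case: j => [[|[|[|k]]] Hj]; [left|right;left|right;right|]; try exact/val_inj.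
by [].
Qed.

Lemma rv3_0 (a b c : R) : rv3 a b c 0 0 = a. Proof. by rewrite mxE. Qed.
Lemma rv3_1 (a b c : R) : rv3 a b c 0 1 = b. Proof. by rewrite mxE. Qed.
Lemma rv3_2 (a b c : R) : rv3 a b c 0 2 = c. Proof. by rewrite mxE. Qed.

Lemma rv3P x y : x 0 0 = y 0 0 -> x 0 1 = y 0 1 -> x 0 2 = y 0 2 -> x = y.
Proof.
move=> h0 h1 h2; apply/rowP => j.
by case: (ord3P j) => [->|[->|->]].
Qed.

Lemma mx3P (A B : 'M[R]_3) : (forall i j, i \in [:: 0; 1; 2] -> j \in [:: 0;1;2] -> A i j = B i j) -> A = B.
Proof.
have mem3 (i : 'I_3) : i \in [:: 0; 1; 2] by case: (ord3P i) => [->|[->|->]].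
by move=> H; apply/matrixP => i j; apply: H; apply: mem3.
Qed.

Definition rows3 (a b c : 'rV[R]_3) : 'M[R]_3 :=
  \matrix_(i < 3, j < 3) (nth 0 [:: a; b; c] i) 0 j.

Lemma rows3_0 a b c j : rows3 a b c 0 j = a 0 j. Proof. by rewrite mxE. Qed.
Lemma rows3_1 a b c j : rows3 a b c 1 j = b 0 j. Proof. by rewrite mxE. Qed.
Lemma rows3_2 a b c j : rows3 a b c 2 j = c 0 j. Proof. by rewrite mxE. Qed.
Lemma row_rows3_0 a b c : row 0 (rows3 a b c) = a.
Proof. by apply/rowP => j; rewrite mxE rows3_0. Qed.
Lemma row_rows3_1 a b c : row 1 (rows3 a b c) = b.
Proof. by apply/rowP => j; rewrite mxE rows3_1. Qed.
Lemma row_rows3_2 a b c : row 2 (rows3 a b c) = c.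
Proof. by apply/rowP => j; rewrite mxE rows3_2. Qed.

Lemma mulE (A B : 'M[R]_3) i j : (A *m B) i j = A i 0 * B 0 j + A i 1 * B 1 j + A i 2 * B 2 j.
Proof. by rewrite mxE sum3. Qed.
Lemma mulrvE x (B : 'M[R]_3) j : (x *m B) 0 j = x 0 0 * B 0 j + x 0 1 * B 1 j + x 0 2 * B 2 j.
Proof. by rewrite mxE sum3. Qed.

Lemma det3 (A : 'M[R]_3) : \det A =
  A 0 0 * (A 1 1 * A 2 2 - A 1 2 * A 2 1)
  - A 0 1 * (A 1 0 * A 2 2 - A 1 2 * A 2 0)
  + A 0 2 * (A 1 0 * A 2 1 - A 1 1 * A 2 0).
Proof.
rewrite (expand_det_row _ ord0) !big_ord_recr big_ord0 /= /cofactor.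
rewrite !(expand_det_row _ ord0) !big_ord_recr big_ord0 /= /cofactor.
rewrite !det_mx11 !big_ord0 !mxE /=.
pose a := fun i j : nat => A (inord i) (inord j).
have Ae : forall i j : 'I_3, A i j = a i j by move=> i j; rewrite /a !inord_val.
rewrite !Ae /=. rewrite /a. ring.
Qed.

Lemma det_mx3 (a b c d e f g h k : R) :
  \det (mx3 [:: a; b; c] [:: d; e; f] [:: g; h; k]) =
  a * (e * k - f * h) - b * (d * k - f * g) + c * (d * h - e * g).
Proof. by rewrite det3 !mxE. Qed.

Lemma formDl G x y z : form G (x + y) z = form G x z + form G y z.
Proof. by rewrite /form !mulmxDl mxE. Qed.
Lemma formDr G x y z : form G z (x + y) = form G z x + form G z y.
Proof. by rewrite /form linearD /= mulmxDr mxE. Qed.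
Lemma formZl G a x z : form G (a *: x) z = a * form G x z.
Proof. by rewrite /form -!scalemxAl mxE. Qed.
Lemma formZr G a x z : form G z (a *: x) = a * form G z x.
Proof. by rewrite /form linearZ /= -scalemxAr mxE. Qed.
Lemma formNl G x z : form G (- x) z = - form G x z.
Proof. by rewrite -scaleN1r formZl mulN1r. Qed.
Lemma formNr G x z : form G z (- x) = - form G z x.
Proof. by rewrite -scaleN1r formZr mulN1r. Qed.
Lemma formBl G x y z : form G (x - y) z = form G x z - form G y z.
Proof. by rewrite formDl formNl. Qed.
Lemma formBr G x y z : form G z (x - y) = form G z x - form G z y.
Proof. by rewrite formDr formNr. Qed.
Lemma form0l G z : form G 0 z = 0.
Proof. by rewrite /form !mul0mx mxE. Qed.
Lemma formC G x y : G^T = G -> form G x y = form G y x.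
Proof.
move=> sG; rewrite /form.
have ->: (y *m G *m x^T) = (x *m G *m y^T)^T by rewrite !trmx_mul trmxK sG mulmxA.
by rewrite [in RHS]mxE.
Qed.

Definition formE := (formDl, formDr, formBl, formBr, formZl, formZr, formNl, formNr).

Lemma dotE x y : (x *m y^T) 0 0 = x 0 0 * y 0 0 + x 0 1 * y 0 1 + x 0 2 * y 0 2.
Proof. by rewrite mxE sum3 !mxE. Qed.

Lemma formV G z x : G \in unitmx -> form G (z *m invmx G) x = (z *m x^T) 0 0.
Proof. by move=> uG; rewrite /form mulmxKV. Qed.

Lemma gramE M G N i j : (M *m G *m N^T) i j = form G (row i M) (row j N).
Proof.
rewrite /form !mxE; apply: eq_bigr => k _; rewrite !mxE; congr (_ * _).
by apply: eq_bigr => l _; rewrite !mxE.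
Qed.

Lemma gram_rows3 G a b c :
  rows3 a b c *m G *m (rows3 a b c)^T =
  mx3 [:: form G a a; form G a b; form G a c]
      [:: form G b a; form G b b; form G b c]
      [:: form G c a; form G c b; form G c c].
Proof.
apply: mx3P => i j; rewrite !inE => /or3P[]/eqP-> /or3P[]/eqP->;
 rewrite gramE ?row_rows3_0 ?row_rows3_1 ?row_rows3_2 !mxE //.
Qed.

Lemma det_gram M G : \det (M *m G *m M^T) = \det M ^+ 2 * \det G.
Proof. by rewrite !det_mulmx det_tr; ring. Qed.

Lemma mul_rows3 x a b c : x *m rows3 a b c = x 0 0 *: a + x 0 1 *: b + x 0 2 *: c.
Proof.
by apply/rowP => j; rewrite mulrvE rows3_0 rows3_1 rows3_2 !mxE.
Qed.

Lemma hbrE x y : hbr x y = (x 0 0 * y 0 1 - x 0 1 * y 0 0) *: X3 R.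
Proof. by apply: rv3P; rewrite !mxE /= ?mulr0 ?mulr1. Qed.


Lemma scE (a : R) x j : (a *: x) 0 j = a * x 0 j. Proof. by rewrite mxE. Qed.
Lemma adE x y j : (x + y) 0 j = x 0 j + y 0 j. Proof. by rewrite mxE. Qed.
Lemma opE x j : (- x) 0 j = - x 0 j. Proof. by rewrite mxE. Qed.
Lemma sbE x y j : (x - y) 0 j = x 0 j - y 0 j. Proof. by rewrite !mxE. Qed.
Definition entE := (adE, sbE, opE, scE).

Lemma lie_B B : B 2 0 = 0 -> B 2 1 = 0 -> B 2 2 = B 0 0 * B 1 1 - B 0 1 * B 1 0 ->
  forall u v : 'rV[R]_3, hbr (u *m B) (v *m B) = hbr u v *m B.
Proof.
move=> h0 h1 h2 u v; rewrite !hbrE -scalemxAl; apply: rv3P;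
 rewrite !scE !mulrvE /X3 !rv3_0 !rv3_1 !rv3_2 ?h0 ?h1 ?h2; ring.
Qed.

Lemma lie_inv B : lie_aut B -> lie_aut (invmx B).
Proof.
case=> uB hB; split; first by rewrite unitmx_inv.
move=> u v; have := hB (u *m invmx B) (v *m invmx B).
rewrite !mulmxKV // => ->; by rewrite mulmxK.
Qed.

Lemma unit_det B : \det B != 0 -> B \in unitmx.
Proof. by rewrite unitmxE unitfE. Qed.

Lemma final (h : 'M[R]_3) G B m0 (h0 : 'M[R]_(m0, 3)) G0 :
  B 2 0 = 0 -> B 2 1 = 0 -> B 2 2 = B 0 0 * B 1 1 - B 0 1 * B 1 0 -> B 2 2 != 0 ->
  B *m G *m B^T = G0 -> (h0 *m B <= h)%MS -> \rank h0 = 2%N -> \rank h = 2%N ->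
  kundt_equiv h G h0 G0.
Proof.
move=> b0 b1 b2 bn gram sub rh0 rh.
have uB : B \in unitmx.
  apply: unit_det; have -> : \det B = B 2 2 * (B 0 0 * B 1 1 - B 0 1 * B 1 0) by rewrite det3 b0 b1; ring.
  by rewrite -b2 mulf_neq0.
have lB : lie_aut B by split => //; apply: lie_B.
exists (invmx B); split; first exact: lie_inv.
- have rk : \rank (h0 *m B) = \rank h by rewrite mxrankMfree ?row_free_unit // rh0 rh.
  have e1 : (h0 *m B == h)%MS by rewrite -(mxrank_leqif_eq sub) rk.
  have e2 := eqmxMr (invmx B) (eqmxP e1).
  rewrite mulmxK // in e2.
  by apply/eqmxP; apply: eqmx_sym.
- rewrite -gram !mulmxA mulVmx // mul1mx -mulmxA -trmx_mul mulVmx // trmx1 mulmx1.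
  done.
Qed.


Definition Cm : 'M[R]_(3, 2) := \matrix_(i < 3, j < 2)
  (if ((i : nat) == 0%N) && ((j : nat) == 0%N) then 1 else
   if ((i : nat) == 2%N) && ((j : nat) == 1%N) then 1 else 0).

Lemma colE (a b : 'rV[R]_3) (i : 'I_(1 + 1)) k :
  col_mx a b i k = if (i : nat) == 0%N then a 0 k else b 0 k.
Proof. by rewrite mxE; case: splitP => j /= ->; rewrite (ord1 j). Qed.

Lemma rank2 (a b : 'rV[R]_3) : a 0 0 = 1 -> a 0 2 = 0 -> b 0 2 = 1 -> b 0 0 = 0 ->
  \rank (col_mx a b) = 2%N.
Proof.
move=> a0 a2 b2 b0; apply/eqP; rewrite eqn_leq rank_leq_row /=.
apply: leq_trans (mxrankM_maxl _ Cm).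
have -> : col_mx a b *m Cm = 1%:M.
  apply/matrixP => i j; rewrite mxE sum3 !colE !mxE.
  case: i => [[|[|k]] Hi] //; case: j => [[|[|l]] Hj] //=; rewrite ?a0 ?a2 ?b0 ?b2.
all: try (rewrite ?mul1r ?mul0r ?mulr0 ?addr0 ?add0r; done).
by rewrite mxrank1.
Qed.

Lemma mul11 (x : 'rV[R]_3) (c : 'cV[R]_3) : (x *m c == 0) = ((x *m c) 0 0 == 0).
Proof.
apply/eqP/eqP => [->|H]; first by rewrite mxE.
by apply/matrixP => i j; rewrite (ord1 i) (ord1 j) H mxE.
Qed.

Lemma hchar (h : 'M[R]_3) G u : G^T = G -> G \in unitmx -> \rank h = 2%N -> u != 0 ->
  (forall w, (w <= h)%MS -> form G u w = 0) ->
  forall w, form G u w = 0 -> (w <= h)%MS.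
Proof.
move=> sG uG rh nu hu.
pose c := G *m u^T.
have fc w : (w *m c) 0 0 = form G w u by rewrite /form /c mulmxA.
have hk : (h <= kermx c)%MS.
  apply/sub_kermxP/row_matrixP => i; rewrite row_mul row0; apply/eqP.
  by rewrite mul11 fc formC // hu ?row_sub // mxE.
have rc : \rank c = 1%N.
  apply/eqP; rewrite eqn_leq rank_leq_col lt0n mxrank_eq0; apply/eqP => c0.
  move/eqP: nu; apply; apply: trmx_inj; rewrite trmx0.
  by rewrite -(mulKmx uG u^T) -/c c0 mulmx0.
have rk : \rank (kermx c) = 2%N by rewrite mxrank_ker rc.
have kh : (kermx c <= h)%MS by rewrite -(mxrank_leqif_sup hk).2 rh rk.
move=> w fw; apply: (submx_trans _ kh); apply/sub_kermxP/eqP.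
by rewrite mul11 fc formC // fw.
Qed.

Lemma lc_cond G u : G \in unitmx -> lcprod G u u = 0 ->
  u 0 1 * form G (X3 R) u = 0 /\ u 0 0 * form G (X3 R) u = 0.
Proof.
move=> uG; rewrite /lcprod => H.
have {}H : forall k, 2^-1 * (form G (hbr u u) (ebas R k) + form G (hbr (ebas R k) u) u
                          + form G (hbr (ebas R k) u) u) = 0.
  move=> k; move/(congr1 (mulmx^~ G)): H; rewrite mulmxKV // mul0mx.
  by move/rowP/(_ k); rewrite !mxE.
have e0 : ebas R 0 = rv3 1 0 0 :> 'rV[R]_3 by apply: rv3P; rewrite !mxE.
have e1 : ebas R 1 = rv3 0 1 0 :> 'rV[R]_3 by apply: rv3P; rewrite !mxE.
have := H 0; have := H 1; rewrite e0 e1 !hbrE !rv3_0 !rv3_1 !formZl.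
move=> A B; split; [move: B|move: A]; rewrite (_ : u 0 0 * u 0 1 - u 0 1 * u 0 0 = 0) ?mul0r; try ring; move=> E; nra.
Qed.

Lemma lor_facts G : lorentzian G -> [/\ G^T = G, \det G < 0 & G \in unitmx].
Proof.
case=> sG [P [uP e]].
have : \det P * \det P * \det G = -1.
  move/(congr1 determinant): e; rewrite det_gram det_mx3 expr2 => ->; ring.
move=> E; have dG : \det G < 0 by nra.
split => //; apply: unit_det; by rewrite ltr0_neq0.
Qed.

Lemma det_rowsX a b : \det (rows3 a b (X3 R)) = a 0 0 * b 0 1 - a 0 1 * b 0 0.
Proof. rewrite det3 !rows3_0 !rows3_1 !rows3_2 /X3 !rv3_0 !rv3_1 !rv3_2; ring. Qed.

Lemma formX3E G x : form G x (X3 R) = (x *m G) 0 2.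
Proof. by rewrite /form mxE sum3 /X3 !mxE /=; ring. Qed.


Lemma formVE G z x : G \in unitmx ->
  form G (z *m invmx G) x = z 0 0 * x 0 0 + z 0 1 * x 0 1 + z 0 2 * x 0 2.
Proof. by move=> uG; rewrite formV // dotE. Qed.

Lemma caseB (h : 'M[R]_3) G u : G^T = G -> G \in unitmx -> \det G < 0 ->
  \rank h = 2%N -> u != 0 ->
  (forall w, (w <= h)%MS -> form G u w = 0) -> (u <= h)%MS ->
  form G (X3 R) u = 0 -> u 0 0 ^+ 2 + u 0 1 ^+ 2 != 0 ->
  exists mu : R, 0 < mu /\ kundt_equiv h G (col_mx (X1 R + X2 R) (X3 R))
                      (mx3 [:: 1; 0; 0] [:: 0; -1; 0] [:: 0; 0; mu]).
Proof.
move=> sG uG dG rh nu hu uh f3u sn.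
have hin := hchar sG uG rh nu hu.
have fuu : form G u u = 0 by apply: hu.
have fu3 : form G u (X3 R) = 0 by rewrite formC.
set s := u 0 0 ^+ 2 + u 0 1 ^+ 2 in sn.
pose z := rv3 (u 0 0 / s) (u 0 1 / s) 0.
pose w := z *m invmx G.
have fwu : form G w u = 1.
  by rewrite formVE // /z !rv3_0 !rv3_1 !rv3_2 /s; field.
have fuw : form G u w = 1 by rewrite formC.
have fw3 : form G w (X3 R) = 0.
  by rewrite formVE // /z /X3 !rv3_0 !rv3_1 !rv3_2; ring.
have f3w : form G (X3 R) w = 0 by rewrite formC.
set qw := form G w w.
set q3 := form G (X3 R) (X3 R).
pose m := 2^-1 *: w - (qw / 4) *: u.
pose Y1 := u + m. pose Y2 := u - m.
have facts := (fuu, fu3, f3u, fwu, fuw, fw3, f3w).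
have K : rows3 Y1 Y2 (X3 R) *m G *m (rows3 Y1 Y2 (X3 R))^T =
         mx3 [:: 1; 0; 0] [:: 0; -1; 0] [:: 0; 0; q3].
  rewrite gram_rows3 /Y1 /Y2 /m !formE !facts -/qw -/q3.
  by congr mx3; congr [:: _; _; _]; field.
set M := rows3 Y1 Y2 (X3 R) in K.
have dM : \det M != 0.
  apply/det0P => [[x nx xM]]; move/eqP: nx; apply.
  have xK : x *m (mx3 [:: 1; 0; 0] [:: 0; -1; 0] [:: 0; 0; q3]) = 0.
    by rewrite -K !mulmxA xM !mul0mx.
  have x0 : x 0 0 = 0.
    by move/rowP/(_ 0): xK; rewrite mulrvE !mxE /=; lra.
  have x1 : x 0 1 = 0.
    by move/rowP/(_ 1): xK; rewrite mulrvE !mxE /=; lra.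
  move: xM; rewrite /M mul_rows3 x0 x1 !scale0r !add0r => /rowP/(_ 2).
  rewrite !mxE /= mulr1 => x2.
  by apply: rv3P; rewrite ?x0 ?x1 ?x2 mxE.
have q3p : 0 < q3.
  move/(congr1 determinant): K; rewrite det_gram det_mx3 => E.
  have : 0 < \det M ^+ 2 by rewrite exprn_even_gt0.
  nra.
have dE : \det M = Y1 0 0 * Y2 0 1 - Y1 0 1 * Y2 0 0 by rewrite /M det_rowsX.
set d := \det M in dM dE.
have d2 : 0 < d ^+ 2 by rewrite exprn_even_gt0.
exists (d * (d * q3)); split; first by rewrite mulrA -expr2 mulr_gt0.
apply: (@final h G (rows3 Y1 Y2 (d *: X3 R))).
- by rewrite rows3_2 scE /X3 rv3_0 mulr0.
- by rewrite rows3_2 scE /X3 rv3_1 mulr0.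
- by rewrite rows3_2 scE /X3 rv3_2 mulr1 !rows3_0 !rows3_1.
- by rewrite rows3_2 scE /X3 rv3_2 mulr1.
- rewrite gram_rows3 /Y1 /Y2 /m !formE !facts -/qw -/q3.
  by congr mx3; congr [:: _; _; _]; field.
- rewrite mul_col_mx col_mx_sub !mul_rows3; apply/andP; split; apply: hin;
    rewrite /X1 /X2 /X3 ?entE !rv3_0 !rv3_1 !rv3_2 /Y1 /Y2 /m !formE !facts; by field.
- by apply: rank2; rewrite /X1 /X2 /X3 ?entE ?rv3_0 ?rv3_1 ?rv3_2 ?addr0 ?add0r.
- exact: rh.
Qed.


Lemma caseA (h : 'M[R]_3) G u : G^T = G -> G \in unitmx -> \det G < 0 ->
  \rank h = 2%N -> u != 0 ->
  (forall w, (w <= h)%MS -> form G u w = 0) -> (u <= h)%MS ->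
  u 0 0 = 0 -> u 0 1 = 0 ->
  kundt_equiv h G (col_mx (X1 R) (X3 R)) (mx3 [:: 1; 0; 0] [:: 0; 0; 1] [:: 0; 1; 0]).
Proof.
move=> sG uG dG rh nu hu uh u0 u1.
have hin := hchar sG uG rh nu hu.
have uE : u = u 0 2 *: X3 R by apply: rv3P; rewrite scE /X3 ?rv3_0 ?rv3_1 ?rv3_2 ?u0 ?u1 ?mulr0 ?mulr1.
set c := u 0 2 in uE.
have cn : c != 0 by apply: contra nu => /eqP c0; rewrite uE c0 scale0r.
have hin3 w : form G (X3 R) w = 0 -> (w <= h)%MS.
  by move=> f; apply: hin; rewrite uE formZl f mulr0.
have f33 : form G (X3 R) (X3 R) = 0.
  have := hu u uh; rewrite {1 2}uE formZl formZr => /eqP.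
  by rewrite !mulf_eq0 (negbTE cn) /= => /eqP.
pose w := X3 R *m invmx G.
have fw3 : form G w (X3 R) = 1 by rewrite formVE // /X3 !rv3_0 !rv3_1 !rv3_2; ring.
have f3w : form G (X3 R) w = 1 by rewrite formC.
have wn : w 0 0 ^+ 2 + w 0 1 ^+ 2 != 0.
  apply/negP => /eqP E.
  have w0 : w 0 0 = 0 by nra.
  have w1 : w 0 1 = 0 by nra.
  have wE : w = w 0 2 *: X3 R by apply: rv3P; rewrite scE /X3 ?rv3_0 ?rv3_1 ?rv3_2 ?w0 ?w1 ?mulr0 ?mulr1.
  by move: fw3; rewrite wE formZl f33 mulr0 => /eqP; rewrite eq_sym oner_eq0.
pose y := rv3 (w 0 1) (- w 0 0) 0.
pose v := y *m invmx G.
have fv3 : form G v (X3 R) = 0 by rewrite formVE // /y /X3 !rv3_0 !rv3_1 !rv3_2; ring.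
have f3v : form G (X3 R) v = 0 by rewrite formC.
have fvw : form G v w = 0 by rewrite formVE // /y !rv3_0 !rv3_1 !rv3_2; ring.
have fwv : form G w v = 0 by rewrite formC.
have vn : v != 0.
  apply/negP => /eqP v0; move/eqP: wn; apply.
  have := formVE y y uG; rewrite -/v v0 form0l /y !rv3_0 !rv3_1 !rv3_2 => E.
  nra.
set qv := form G v v.
set qw := form G w w.
have facts := (fv3, f3v, fvw, fwv, f33, f3w, fw3).
have K1 : rows3 v (X3 R) w *m G *m (rows3 v (X3 R) w)^T =
          mx3 [:: qv; 0; 0] [:: 0; 0; 1] [:: 0; 1; qw].
  by rewrite gram_rows3 !facts -/qv -/qw.
set M1 := rows3 v (X3 R) w in K1.
have dM1 : \det M1 != 0.
  apply/det0P => [[x nx xM]]; move/eqP: nx; apply.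
  have xK : x *m (mx3 [:: qv; 0; 0] [:: 0; 0; 1] [:: 0; 1; qw]) = 0.
    by rewrite -K1 !mulmxA xM !mul0mx.
  have x2 : x 0 2 = 0.
    by move/rowP/(_ 1): xK; rewrite mulrvE !mxE /=; lra.
  have x1 : x 0 1 = 0.
    by move/rowP/(_ 2): xK; rewrite mulrvE !mxE /= x2; lra.
  move: xM; rewrite /M1 mul_rows3 x1 x2 !scale0r !addr0 => /eqP.
  rewrite scaler_eq0 (negbTE vn) orbF => /eqP x0.
  by apply: rv3P; rewrite ?x0 ?x1 ?x2 mxE.
have qvp : 0 < qv.
  move/(congr1 determinant): K1; rewrite det_gram det_mx3 => E.
  have : 0 < \det M1 ^+ 2 by rewrite exprn_even_gt0.
  nra.
pose r := Num.sqrt qv.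
have rp : 0 < r by rewrite sqrtr_gt0.
have qvr : qv = r ^+ 2 by rewrite sqr_sqrtr // ltW.
pose Y1' := r^-1 *: v.
pose n2 := w - (qw / 2) *: X3 R.
have K2 : rows3 Y1' n2 (X3 R) *m G *m (rows3 Y1' n2 (X3 R))^T =
          mx3 [:: 1; 0; 0] [:: 0; 0; 1] [:: 0; 1; 0].
  rewrite gram_rows3 /Y1' /n2 !formE !facts -/qv -/qw qvr.
  by congr mx3; congr [:: _; _; _]; field; rewrite ?gt_eqF.
have d0E : \det (rows3 Y1' n2 (X3 R)) = Y1' 0 0 * n2 0 1 - Y1' 0 1 * n2 0 0 by rewrite det_rowsX.
set d0 := \det (rows3 Y1' n2 (X3 R)) in K2 d0E.
have d0n : d0 != 0.
  move/(congr1 determinant): K2; rewrite det_gram det_mx3 -/d0 => E.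
  by apply/eqP => d00; move: E; rewrite d00 expr0n /= mul0r; lra.
pose sg : R := if 0 < d0 then 1 else -1.
have sg2 : sg * sg = 1 by rewrite /sg; case: ifP => _; ring.
have ep : 0 < sg * d0.
  rewrite /sg; case: ifP => [p|/negbT np]; first by rewrite mul1r.
  rewrite -leNgt le_eqVlt (negbTE d0n) /= in np; by rewrite mulN1r oppr_gt0.
pose t := Num.sqrt (sg * d0).
have tp : 0 < t by rewrite sqrtr_gt0.
have et : sg * d0 = t ^+ 2 by rewrite sqr_sqrtr // ltW.
pose Y1 := sg *: Y1'.
pose Y2 := t^-1 *: n2.
pose d := Y1 0 0 * Y2 0 1 - Y1 0 1 * Y2 0 0.
have dt : d = t.
  have E : d = t^-1 * t ^+ 2 by rewrite -et /d d0E /Y1 /Y2 !scE; ring.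
  by rewrite E; field; rewrite ?gt_eqF.
apply: (@final h G (rows3 Y1 Y2 (d *: X3 R))).
- by rewrite rows3_2 scE /X3 rv3_0 mulr0.
- by rewrite rows3_2 scE /X3 rv3_1 mulr0.
- by rewrite rows3_2 scE /X3 rv3_2 mulr1 !rows3_0 !rows3_1.
- by rewrite rows3_2 scE /X3 rv3_2 mulr1 dt gt_eqF.
- rewrite gram_rows3 /Y1 /Y2 /Y1' /n2 dt !formE !facts -/qv -/qw qvr.
  have sgc : sg = 1 \/ sg = -1 by rewrite /sg; case: ifP; [left|right].
  by case: sgc => ->; congr mx3; congr [:: _; _; _]; field; rewrite ?gt_eqF.
- rewrite mul_col_mx col_mx_sub !mul_rows3; apply/andP; split; apply: hin3;
    rewrite /X1 /X3 ?rv3_0 ?rv3_1 ?rv3_2 /Y1 /Y2 /Y1' /n2 !formE !facts; by field; rewrite ?gt_eqF.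
- by apply: rank2; rewrite /X1 /X3 ?rv3_0 ?rv3_1 ?rv3_2.
- exact: rh.
Qed.

End S.

Theorem theorem5p3 (R : realType) (h G : 'M[R]_3) :
  kundt_pair h G ->
  (exists mu : R, 0 < mu /\
     (kundt_equiv h G (col_mx (X1 R + X2 R) (X3 R))
                      (mx3 [:: 1; 0; 0] [:: 0; -1; 0] [:: 0; 0; mu])
      \/ kundt_equiv h G (col_mx (X1 R - X2 R) (X3 R))
                      (mx3 [:: 1; 0; 0] [:: 0; -1; 0] [:: 0; 0; mu])))
  \/ kundt_equiv h G (col_mx (X1 R) (X3 R))
                     (mx3 [:: 1; 0; 0] [:: 0; 0; 1] [:: 0; 1; 0]).
Proof.
case=> lor [rh _] [u [uh nu hu]] _ ee.
have [sG dG uG] := lor_facts lor.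
have [A B] := lc_cond uG (ee u hu).
case: (eqVneq (u 0 0 ^+ 2 + u 0 1 ^+ 2) 0) => sn.
- right; apply: (caseA sG uG dG rh nu hu uh); nra.
- left.
  have f3u : Defs.form G (X3 R) u = 0.
    case: (eqVneq (Defs.form G (X3 R) u) 0) => // fn; move/eqP: sn; case.
    move/eqP: A; rewrite mulf_eq0 (negbTE fn) orbF => /eqP ->.
    move/eqP: B; rewrite mulf_eq0 (negbTE fn) orbF => /eqP ->.
    by rewrite expr0n /= addr0.
  have [mu [mp E]] := caseB sG uG dG rh nu hu uh f3u sn.
  by exists mu; split => //; left.
Qed.
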